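(* Let $q$ be a self-join-free Boolean conjunctive query and let $\mathbf{db}$ be a database. Let $A,B\in\mathbf{db}$. (1) If $A\hookrightarrow B$, then $A\hookrightarrow B'$ for every fact $B'\in\mathbf{db}$ key-equal to $B$. (2) If $A\hookrightarrow B$, $A\hookrightarrow B'$ and $\mathrm{atom}(B)=\mathrm{atom}(B')$, then $B$ and $B'$ are key-equal.
   Context: Every relation name has a signature $[n,k]$ ($1\le k\le n$; primary-key positions $1,\dots,k$) and a mode in $\{\mathsf{c},\mathsf{i}\}$. For an atom $F$, $\mathrm{key}(F)$ = variables at primary-key positions, $\mathrm{vars}(F)$ = all its variables. Facts are variable-free atoms; facts are key-equal if same relation name and same primary-key values. A database is a finite set of facts with no two distinct key-equal facts of mode $\mathsf{c}$; all relation names of facts in $\mathbf{db}$ occur in $q$. A self-join-free Boolean conjunctive query is a finite set of atoms with distinct relation names. For a fact $A$, $\mathrm{atom}(A)$ is the atom of $q$ with the same relation name. $\mathcal{K}(p)=\{\mathrm{key}(F)\to\mathrm{vars}(F)\mid F\in p\}$ (FDs over variables), $q^{\mathsf{c}}$ = atoms of $q$ of mode $\mathsf{c}$. The M-graph of $q$: vertices atoms of $q$, edge $F\to G$ ($F\ne G$) iff $\mathcal{K}(q^{\mathsf{c}})\models\mathrm{vars}(F)\to\mathrm{key}(G)$. The $\hookrightarrow$-graph of $\mathbf{db}$ has the facts of $\mathbf{db}$ as vertices and an edge $A\hookrightarrow B$ iff there are a valuation $\theta$ of the variables of $q$ and an M-graph edge $F\to G$ with $\theta(q)\subseteq\mathbf{db}$,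 $A=\theta(F)$ and $B$ key-equal to $\theta(G)$. *)

(* Defs.v *)
From Stdlib Require Import List.
Import ListNotations.
Set Implicit Arguments.

Inductive mode := ModeC | ModeI.

Record schema (Rel : Type) := Schema {
  arity : Rel -> nat;
  keylen : Rel -> nat;
  rmode : Rel -> mode
}.

Definition schema_wf (Rel : Type) (S : schema Rel) : Prop :=
  forall R, 1 <= keylen S R /\ keylen S R <= arity S R.

Section Defs.
Variables (Rel V C : Type) (S : schema Rel).

Inductive term := TVar (x : V) | TConst (c : C).

Record atom := Atom { rel : Rel; args : list term }.

Record fact := Fact { frel : Rel; fargs : list C }.

Definition atom_wf (F : atom) : Prop := length (args F) = arity S (rel F).
Definition fact_wf (A : fact) : Prop := length (fargs A) = arity S (frel A).

Definition vars (F : atom) : V -> Prop := fun x => In (TVar x) (args F).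
Definition key (F : atom) : V -> Prop :=
  fun x => In (TVar x) (firstn (keylen S (rel F)) (args F)).

Definition key_equal (A B : fact) : Prop :=
  frel A = frel B /\
  firstn (keylen S (frel A)) (fargs A) = firstn (keylen S (frel B)) (fargs B).

Definition sjf_query (q : list atom) : Prop :=
  NoDup (map rel q) /\ forall F, In F q -> atom_wf F.

Definition database (q : list atom) (db : list fact) : Prop :=
  (forall A, In A db -> fact_wf A) /\
  (forall A B, In A db -> In B db -> rmode S (frel A) = ModeC ->
       key_equal A B -> A = B) /\
  (forall A, In A db -> exists F, In F q /\ rel F = frel A).

Definition atom_of (q : list atom) (A : fact) (F : atom) : Prop :=
  In F q /\ rel F = frel A.

Definition apply_term (theta : V -> C) (t : term) : C :=
  match t with TVar x => theta x | TConst c => c end.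
Definition apply_atom (theta : V -> C) (F : atom) : fact :=
  Fact (rel F) (map (apply_term theta) (args F)).
Definition embeds (theta : V -> C) (q : list atom) (db : list fact) : Prop :=
  forall F, In F q -> In (apply_atom theta F) db.

(* Functional dependencies X -> Y over variables; K(p) is the set
   {key(F) -> vars(F) | F in p}, p given as a predicate on atoms. *)
Definition fd_sat (D : Type) (T : list (V -> D)) (X Y : V -> Prop) : Prop :=
  forall t1 t2, In t1 T -> In t2 T ->
    (forall x, X x -> t1 x = t2 x) -> forall y, Y y -> t1 y = t2 y.

Definition K_entails (p : atom -> Prop) (X Y : V -> Prop) : Prop :=
  forall (D : Type) (T : list (V -> D)),
    (forall F, p F -> fd_sat T (key F) (vars F)) -> fd_sat T X Y.

Definition qc (q : list atom) : atom -> Prop :=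
  fun F => In F q /\ rmode S (rel F) = ModeC.

Definition mgraph_edge (q : list atom) (F G : atom) : Prop :=
  In F q /\ In G q /\ F <> G /\ K_entails (qc q) (vars F) (key G).

Definition hook (q : list atom) (db : list fact) (A B : fact) : Prop :=
  In A db /\ In B db /\
  exists (theta : V -> C) (F G : atom),
    mgraph_edge q F G /\ embeds theta q db /\
    A = apply_atom theta F /\ key_equal B (apply_atom theta G).

End Defs.

(* Main.v *)
Require Import Defs.
From Stdlib Require Import List.
Import ListNotations.

Lemma nodup_map_inj (A B : Type) (f : A -> B) (l : list A) x y :
  NoDup (map f l) -> In x l -> In y l -> f x = f y -> x = y.
Proof.
  induction l as [|a l IH]; simpl; intros Hn Hx Hy He; [contradiction|].
  inversion Hn as [|? ? Hni Hn']; subst.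
  destruct Hx as [<-|Hx]; destruct Hy as [<-|Hy]; auto.
  - exfalso; apply Hni; rewrite He; apply in_map; auto.
  - exfalso; apply Hni; rewrite <- He; apply in_map; auto.
Qed.

Lemma map_agree (V C : Type) (t1 t2 : V -> C) (l : list (term V C)) x :
  map (apply_term t1) l = map (apply_term t2) l -> In (@TVar V C x) l -> t1 x = t2 x.
Proof.
  induction l as [|a l IH]; simpl; intros He Hi; [contradiction|].
  injection He as He1 He2. destruct Hi as [Ha|Hi]; [subst a; simpl in He1; auto|auto].
Qed.

Lemma map_agree2 (V C : Type) (t1 t2 : V -> C) (l : list (term V C)) :
  (forall x, In (@TVar V C x) l -> t1 x = t2 x) ->
  map (apply_term t1) l = map (apply_term t2) l.
Proof.
  induction l as [|a l IH]; simpl; intros H; auto.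
  f_equal; auto. destruct a; simpl; auto.
Qed.

Lemma ke_sym Rel C (S : schema Rel) (A B : fact Rel C) :
  key_equal S A B -> key_equal S B A.
Proof. unfold key_equal; intros [H1 H2]; auto. Qed.

Lemma ke_trans Rel C (S : schema Rel) (A B D : fact Rel C) :
  key_equal S A B -> key_equal S B D -> key_equal S A D.
Proof. unfold key_equal; intros [H1 H2] [H3 H4]; split; congruence. Qed.

Theorem lemma13 (Rel V C : Type) (S : schema Rel) (q : list (atom Rel V C))
  (db : list (fact Rel C)) (A B : fact Rel C) :
  schema_wf S -> sjf_query S q -> database S q db ->
  In A db -> In B db ->
  (forall B' : fact Rel C, In B' db -> key_equal S B B' ->
     hook S q db A B -> hook S q db A B') /\
  (forall B' : fact Rel C, In B' db ->
     hook S q db A B -> hook S q db A B' ->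
     (exists F, atom_of q B F /\ atom_of q B' F) ->
     key_equal S B B').
Proof.
  intros Hwf [Hnd Hqwf] [Hdbwf [Hdbc Hdbq]] HA HB. split.
  - intros B' HB' Hke [_ [_ [th [F [G [He [Hem [HAe Hk]]]]]]]].
    split; [|split]; auto. exists th, F, G. split; [exact He|split; [exact Hem|split; [exact HAe|]]].
    eapply ke_trans; [apply ke_sym; exact Hke|exact Hk].
  - intros B' HB' [_ [_ [t1 [F1 [G1 [[HF1 [HG1 [_ Hent]]] [Hem1 [HA1 Hk1]]]]]]]]
      [_ [_ [t2 [F2 [G2 [[HF2 [HG2 _]] [Hem2 [HA2 Hk2]]]]]]]]
      [F [[HF HrF] [_ HrF']]].
    assert (EF : F1 = F2).
    { eapply nodup_map_inj; eauto. rewrite HA1 in HA2.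
      apply (f_equal (@frel Rel C)) in HA2. exact HA2. }
    subst F2.
    assert (EG : G1 = G2).
    { eapply nodup_map_inj; eauto.
      destruct Hk1 as [Hr1 _]; destruct Hk2 as [Hr2 _]. simpl in *. congruence. }
    subst G2.
    assert (Hagr : forall x, vars F1 x -> t1 x = t2 x).
    { intros x Hx. rewrite HA1 in HA2. apply (f_equal (@fargs Rel C)) in HA2.
      simpl in HA2. eapply map_agree; eauto. }
    assert (Hkey : forall y, key S G1 y -> t1 y = t2 y).
    { refine (Hent C [t1; t2] _ t1 t2 _ _ Hagr); simpl; auto.
      intros H [HH HHc] s1 s2 Hs1 Hs2 Hks.
      assert (Hfact : forall (u1 u2 : V -> C), (u1 = t1 \/ u1 = t2) -> (u2 = t1 \/ u2 = t2) ->
         (forall x, key S H x -> u1 x = u2 x) -> forall y, vars H y -> u1 y = u2 y).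
      { intros u1 u2 Hu1 Hu2 Hk y Hy.
        assert (Hi1 : In (apply_atom u1 H) db) by (destruct Hu1; subst; auto).
        assert (Hi2 : In (apply_atom u2 H) db) by (destruct Hu2; subst; auto).
        assert (E : apply_atom u1 H = apply_atom u2 H).
        { apply Hdbc; auto. split; auto. simpl. rewrite !firstn_map.
          apply map_agree2. exact Hk. }
        apply (f_equal (@fargs Rel C)) in E. simpl in E.
        eapply map_agree; eauto. }
      destruct Hs1 as [<-|[<-|[]]]; destruct Hs2 as [<-|[<-|[]]]; apply Hfact; auto. }
    eapply ke_trans; [exact Hk1|]. eapply ke_trans; [|apply ke_sym; exact Hk2].
    split; auto. simpl. rewrite !firstn_map. apply map_agree2. exact Hkey.
Qed.
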